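(* Let $\alpha\in(0,1)$ and $R>0$. A target moves in the plane with position $(0,y_T(t))$, $\dot y_T=1$, and an observer moves with position $(x_O(t),y_O(t))$, $\dot x_O=\alpha\cos\psi(t)$, $\dot y_O=\alpha\sin\psi(t)$, where the heading $\psi$ is a measurable control. Suppose that at time $t_2$ the target lies on the boundary of the observer's observation disk of radius $R$, with relative bearing $\lambda=\lambda_{TO,2}\in[-\pi,\pi]$, i.e. $\big(x_O(t_2),\,y_O(t_2)-y_T(t_2)\big)=R(\sin\lambda,\cos\lambda)$. Then the heading which maximizes the observation time $t_f-t_2$ (Phase-II) is the constant heading $$\psi_{O,2}^*=\cos^{-1}\!\left(\frac{(\alpha^2-1)\sin\lambda}{\alpha^2+2\alpha\cos\lambda+1}\right).$$
   Context: The target is observed when $\sqrt{x_O^2+(y_O-y_T)^2}\le R$. For a control $\psi$ on $[t_2,\infty)$, the escape time is $t_f=\inf\{t\ge t_2:\ x_O(t)^2+(y_O(t)-y_T(t))^2>R^2\}$, and the observation time is $t_f-t_2$. $\alpha=v_O/v_T$ is the speed ratio of observer to target (target speed normalized to $1$). Headings are measured counterclockwise from the positive $x$-axis. *)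

(* Defs.v *)
From HB Require Import structures.
From mathcomp Require Import all_boot all_order all_algebra.
From mathcomp Require Import all_classical all_reals all_analysis.
Set Implicit Arguments. Unset Strict Implicit. Unset Printing Implicit Defensive.
Import Order.TTheory GRing.Theory Num.Theory.
Import numFieldNormedType.Exports.
Local Open Scope classical_set_scope.
Local Open Scope ring_scope.

Definition obs_x {R : realType} (alpha t2 xO2 : R) (psi : R -> R) (t : R) : R :=
  xO2 + Rintegral lebesgue_measure `[t2, t] (fun s => alpha * cos (psi s)).

Definition obs_y {R : realType} (alpha t2 yO2 : R) (psi : R -> R) (t : R) : R :=
  yO2 + Rintegral lebesgue_measure `[t2, t] (fun s => alpha * sin (psi s)).

Definition tgt_y {R : realType} (t2 yT2 : R) (t : R) : R := yT2 + (t - t2).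

Definition escape_time {R : realType} (alpha Rad t2 xO2 yO2 yT2 : R)
    (psi : R -> R) : R :=
  inf [set t | t2 <= t /\
     Rad ^+ 2 < (obs_x alpha t2 xO2 psi t) ^+ 2
                + (obs_y alpha t2 yO2 psi t - tgt_y t2 yT2 t) ^+ 2].

Definition observation_time {R : realType} (alpha Rad t2 xO2 yO2 yT2 : R)
    (psi : R -> R) : R :=
  escape_time alpha Rad t2 xO2 yO2 yT2 psi - t2.

Definition psi_star {R : realType} (alpha lambda : R) : R :=
  acos (((alpha ^+ 2 - 1) * sin lambda) /
        (alpha ^+ 2 + 2 * alpha * cos lambda + 1)).

(* Main.v *)
Require Import Defs.
From HB Require Import structures.
From mathcomp Require Import all_boot all_order all_algebra.
From mathcomp Require Import all_classical all_reals all_analysis.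
From mathcomp Require Import ring lra measurable_realfun.
Import Order.TTheory GRing.Theory Num.Theory.
Import numFieldNormedType.Exports.
Local Open Scope classical_set_scope.
Local Open Scope ring_scope.

Section H.
Variable R : realType.
Notation mu := (@lebesgue_measure R).

Lemma mu_itv (a b : R) : a <= b -> mu `[a, b] = (b - a)%:E.
Proof.
move=> ab; rewrite lebesgue_measure_itv /= lte_fin.
case: (ltP a b) => h; first by [].
have -> : b = a by apply/eqP; rewrite eq_le ab h.
by rewrite subrr.
Qed.

Lemma Rint_cst (a b k : R) : a <= b -> Rintegral mu `[a, b] (fun _ => k) = k * (b - a).
Proof.
move=> ab; rewrite Rintegral_cst //.
congr (_ * _); rewrite -[RHS]/(fine ((b-a)%:E)); congr fine; exact: mu_itv.
Qed.

Lemma int_trig (a b k : R) (g : R -> R) (tr : R -> R) :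
  a <= b -> continuous tr -> (forall x, `|tr x| <= 1) ->
  measurable_fun `[a, b] g ->
  mu.-integrable `[a, b] (EFin \o (fun s => k * tr (g s))).
Proof.
move=> ab ctr btr mg.
apply: measurable_bounded_integrable => //.
- have h := mu_itv a b ab; rewrite [X in (X < _)%E]h; exact: ltry.
- apply: measurable_funM; first exact: measurable_cst.
  apply: measurableT_comp => //; exact: continuous_measurable_fun.
- exists `|k|; split; first exact: num_real.
  move=> M kM x Ax /=.
  rewrite normrM (le_trans _ (ltW kM))// ler_piMr//.
Qed.

Lemma int_bound (alpha a b : R) (psi : R -> R) : 0 <= alpha -> a <= b ->
  measurable_fun `[a, b] psi ->
  (Rintegral mu `[a, b] (fun s => alpha * cos (psi s))) ^+ 2 +
  (Rintegral mu `[a, b] (fun s => alpha * sin (psi s))) ^+ 2 <= (alpha * (b - a)) ^+ 2.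
Proof.
move=> a0 ab mpsi.
set A := Rintegral _ _ _; set B := Rintegral _ _ _.
have iC := int_trig a b alpha psi cos ab (@continuous_cos R) (@cos_max R) mpsi.
have iS := int_trig a b alpha psi sin ab (@continuous_sin R) (@sin_max R) mpsi.
have iCA : mu.-integrable `[a, b] (EFin \o (fun s => A * (alpha * cos (psi s)))).
  rewrite (_ : (fun s => A * (alpha * cos (psi s))) = (fun s => (A*alpha) * cos (psi s))).
    exact: (int_trig _ _ _ _ _ ab (@continuous_cos R) (@cos_max R) mpsi).
  by apply/funext => x; rewrite mulrA.
have iSB : mu.-integrable `[a, b] (EFin \o (fun s => B * (alpha * sin (psi s)))).
  rewrite (_ : (fun s => B * (alpha * sin (psi s))) = (fun s => (B*alpha) * sin (psi s))).
    exact: (int_trig _ _ _ _ _ ab (@continuous_sin R) (@sin_max R) mpsi).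
  by apply/funext => x; rewrite mulrA.
set S := Num.sqrt (A ^+ 2 + B ^+ 2).
have S0 : 0 <= S by exact: sqrtr_ge0.
have S2 : S ^+ 2 = A ^+ 2 + B ^+ 2 by rewrite sqr_sqrtr // addr_ge0 // sqr_ge0.
have E : A ^+ 2 + B ^+ 2 = Rintegral mu `[a, b]
    (fun s => A * (alpha * cos (psi s)) + B * (alpha * sin (psi s))).
  rewrite RintegralD // !expr2; congr (_ + _); rewrite RintegralZl //.
  
have le1 : A ^+ 2 + B ^+ 2 <= S * alpha * (b - a).
  rewrite E -Rint_cst //; apply: le_Rintegral => //.
    by apply: (integrableD _ iCA iSB).
    rewrite (_ : (fun _ => S * alpha) = (fun s => (S * alpha) * (fun _ => 1) (psi s))).
      apply: (int_trig a b (S*alpha) psi (fun _ => 1) ab _ _ mpsi).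
      - exact: cst_continuous.
      - by move=> _; rewrite normr1.
    by apply/funext => x; rewrite mulr1.
  move=> x _ /=.
  have h := cos2Dsin2 (psi x).
  set c := cos (psi x) in h *; set d := sin (psi x) in h *.
  have hu : A * c + B * d <= S.
    have : (A * c + B * d) ^+ 2 <= S ^+ 2.
      rewrite S2.
      have -> : A ^+ 2 + B ^+ 2 = (A ^+ 2 + B ^+ 2) * (c ^+ 2 + d ^+ 2) by rewrite h mulr1.
      have := sqr_ge0 (A * d - B * c); nra.
    nra.
  nra.
have L0 : 0 <= alpha * (b - a) by rewrite mulr_ge0 // subr_ge0.
have [Sz|Sp] := eqVneq S 0.
  by rewrite -S2 Sz expr0n /= sqr_ge0.
have Sp' : 0 < S by rewrite lt_neqAle eq_sym Sp.
have : S <= alpha * (b - a).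
  rewrite -S2 in le1; nra.
rewrite -S2; nra.
Qed.
Lemma key_up (al Rad s c tau P Q : R) : 0 < al -> al < 1 -> 0 < Rad ->
  s ^+ 2 + c ^+ 2 = 1 -> 0 < tau -> 2 * Rad * (al + c) < (1 - al ^+ 2) * tau ->
  P ^+ 2 + Q ^+ 2 <= (al * tau) ^+ 2 ->
  Rad ^+ 2 < (Rad * s + P) ^+ 2 + (Rad * c + Q - tau) ^+ 2.
Proof.
move=> a0 a1 R0 sc t0 ht hPQ.
set Cx := Rad * s; set Cy := Rad * c - tau.
have -> : Rad * c + Q - tau = Cy + Q by rewrite /Cy; ring.
have hC : (Rad + al * tau) ^+ 2 < Cx ^+ 2 + Cy ^+ 2.
  have -> : Cx ^+ 2 + Cy ^+ 2 = Rad ^+ 2 * (s ^+ 2 + c ^+ 2) - 2 * Rad * c * tau + tau ^+ 2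
    by rewrite /Cx /Cy; ring.
  rewrite sc mulr1.
  have h1 : 0 < (1 - al ^+ 2) * tau - 2 * Rad * (al + c) by rewrite subr_gt0.
  have := mulr_gt0 t0 h1. nra.
set a := Num.sqrt (Cx ^+ 2 + Cy ^+ 2); set b := Num.sqrt (P ^+ 2 + Q ^+ 2).
have a0' : 0 <= a by exact: sqrtr_ge0.
have b0 : 0 <= b by exact: sqrtr_ge0.
have a2 : a ^+ 2 = Cx ^+ 2 + Cy ^+ 2 by rewrite sqr_sqrtr // addr_ge0 // sqr_ge0.
have b2 : b ^+ 2 = P ^+ 2 + Q ^+ 2 by rewrite sqr_sqrtr // addr_ge0 // sqr_ge0.
have at0 : 0 <= al * tau by rewrite mulr_ge0 // ltW.
have hb : b <= al * tau by rewrite -b2 in hPQ; nra.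
have ha : Rad + al * tau < a by rewrite -a2 in hC; nra.
have hu : - (a * b) <= Cx * P + Cy * Q.
  have : (Cx * P + Cy * Q) ^+ 2 <= (a * b) ^+ 2.
    rewrite exprMn a2 b2; have := sqr_ge0 (Cx * Q - Cy * P); nra.
  have := mulr_ge0 a0' b0; nra.
have -> : (Cx + P) ^+ 2 + (Cy + Q) ^+ 2 = a ^+ 2 + 2 * (Cx * P + Cy * Q) + b ^+ 2
  by rewrite a2 b2; ring.
nra.
Qed.

Lemma key_low (al Rad s c x y ts tau : R) :
  x ^+ 2 + y ^+ 2 = 1 -> s ^+ 2 + c ^+ 2 = 1 ->
  2 * (Rad * s * al * x + Rad * c * (al * y - 1)) +
     ts * ((al * x) ^+ 2 + (al * y - 1) ^+ 2) = 0 ->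
  0 <= tau -> tau <= ts ->
  (Rad * s + al * x * tau) ^+ 2 + (Rad * c + al * y * tau - tau) ^+ 2 <= Rad ^+ 2.
Proof.
move=> hxy sc hid t0 tts.
set K := (al * x) ^+ 2 + (al * y - 1) ^+ 2.
have K0 : 0 <= K by rewrite addr_ge0 // sqr_ge0.
have h1 : 0 <= ts - tau by rewrite subr_ge0.
have h3 := mulr_ge0 (mulr_ge0 t0 h1) K0.
have -> : (Rad * s + al * x * tau) ^+ 2 + (Rad * c + al * y * tau - tau) ^+ 2 =
   Rad ^+ 2 * (s ^+ 2 + c ^+ 2) + tau * (2 * (Rad * s * al * x + Rad * c * (al * y - 1))) + tau ^+ 2 * K
  by rewrite /K; ring.
rewrite sc mulr1.
have e : 2 * (Rad * s * al * x + Rad * c * (al * y - 1)) = - (ts * K) by rewrite /K; lra.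
rewrite e.
nra.
Qed.

Lemma ident (al Rad s c : R) :
  s ^+ 2 = 1 - c ^+ 2 ->
  al ^+ 2 + 2 * al * c + 1 != 0 -> 1 - al ^+ 2 != 0 ->
  let D := al ^+ 2 + 2 * al * c + 1 in
  let x := (al ^+ 2 - 1) * s / D in
  let y := (2 * al + (1 + al ^+ 2) * c) / D in
  let ts := 2 * Rad * (al + c) / (1 - al ^+ 2) in
  x ^+ 2 + y ^+ 2 = 1 /\ 2 * (Rad * s * al * x + Rad * c * (al * y - 1)) +
     ts * ((al * x) ^+ 2 + (al * y - 1) ^+ 2) = 0.
Proof.
move=> hs Dn an D x y ts.
have e1 : Rad * s * al * x = Rad * al * (al ^+ 2 - 1) * (1 - c ^+ 2) / D.
  by rewrite -hs /x; field.
have e2 : (al * x) ^+ 2 = al ^+ 2 * (al ^+ 2 - 1) ^+ 2 * (1 - c ^+ 2) / D ^+ 2.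
  by rewrite -hs /x; field.
have e3 : x ^+ 2 = (al ^+ 2 - 1) ^+ 2 * (1 - c ^+ 2) / D ^+ 2.
  by rewrite -hs /x; field.
split.
  rewrite e3 /y /D; field; exact: Dn.
rewrite e1 e2 /y /ts /D; field.
by rewrite Dn an.
Qed.

Lemma inf_le_of (S : set R) (a m : R) :
  (forall t, S t -> a <= t) -> (forall t, m < t -> S t) -> inf S <= m.
Proof.
move=> lb up; have hl : has_lbound S by exists a.
rewrite leNgt; apply/negP => hm.
have ht : m < (m + inf S) / 2 by lra.
have := ge_inf hl (up _ ht); lra.
Qed.
End H.

Theorem lemma1 (R : realType) (alpha Rad lambda t2 xO2 yO2 yT2 : R)
  (halpha0 : 0 < alpha) (halpha1 : alpha < 1) (hRad : 0 < Rad)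
  (hlam : - pi <= lambda <= pi)
  (hx : xO2 = Rad * sin lambda) (hy : yO2 - yT2 = Rad * cos lambda) :
  forall psi : R -> R, measurable_fun `[t2, +oo[ psi ->
    observation_time alpha Rad t2 xO2 yO2 yT2 psi
      <= observation_time alpha Rad t2 xO2 yO2 yT2 (fun _ => psi_star alpha lambda).
Proof.
move=> psi mpsi.
set s := sin lambda in hx *; set c := cos lambda in hy *.
have sc : s ^+ 2 + c ^+ 2 = 1 by rewrite addrC cos2Dsin2.
have hs2 : s ^+ 2 = 1 - c ^+ 2 by lra.
have [cm1 c1] : -1 <= c /\ c <= 1.
  by have := cos_max lambda; rewrite ler_norml => /andP[].
have Dp : 0 < alpha ^+ 2 + 2 * alpha * c + 1 by nra.
have an : 0 < 1 - alpha ^+ 2 by nra.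
have Hup : forall p, measurable_fun `[t2, +oo[ p -> forall t, t2 < t ->
    2 * Rad * (alpha + c) < (1 - alpha ^+ 2) * (t - t2) ->
    t2 <= t /\ Rad ^+ 2 < (obs_x alpha t2 xO2 p t) ^+ 2 +
                          (obs_y alpha t2 yO2 p t - tgt_y t2 yT2 t) ^+ 2.
  move=> p mp t tt ht; split; first exact: ltW.
  have sub : `[t2, t] `<=` `[t2, +oo[.
    by move=> u; rewrite /= !in_itv /= => /andP[->].
  have mp' : measurable_fun `[t2, t] p by apply: (measurable_funS _ sub mp).
  have hb := int_bound R alpha t2 t p (ltW halpha0) (ltW tt) mp'.
  rewrite /obs_x /obs_y /tgt_y hx.
  set P := Rintegral _ _ _ in hb *; set Q := Rintegral _ _ _ in hb *.
  have -> : yO2 + Q - (yT2 + (t - t2)) = Rad * c + Q - (t - t2).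
    by rewrite -hy; ring.
  apply: (@key_up R alpha) => //; lra.
have Hinf : forall p, measurable_fun `[t2, +oo[ p -> forall m, 0 <= m ->
    2 * Rad * (alpha + c) <= (1 - alpha ^+ 2) * m ->
    escape_time alpha Rad t2 xO2 yO2 yT2 p <= t2 + m.
  move=> p mp m m0 hm; apply: (@inf_le_of R _ t2).
    by move=> t [].
  move=> t tm; apply: Hup => //; first lra.
  have : (1 - alpha ^+ 2) * m < (1 - alpha ^+ 2) * (t - t2).
    by rewrite ltr_pM2l //; lra.
  lra.
have mcst : measurable_fun `[t2, +oo[ (fun _ : R => psi_star alpha lambda).
  exact: measurable_cst.
rewrite /observation_time lerD2r.
case: (leP (alpha + c) 0) => hac.
  apply: (le_trans (Hinf psi mpsi 0 (lexx _) _)); first by nra.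
  apply: lb_le_inf.
    exists (t2 + 1); apply: Hup => //; [lra|nra].
  by move=> t [h _]; rewrite addr0.
set D := alpha ^+ 2 + 2 * alpha * c + 1.
set ts := 2 * Rad * (alpha + c) / (1 - alpha ^+ 2).
have tsE : (1 - alpha ^+ 2) * ts = 2 * Rad * (alpha + c).
  by rewrite /ts mulrC divfK // gt_eqF.
have ts0 : 0 < ts by rewrite /ts divr_gt0 //; nra.
apply: (le_trans (Hinf psi mpsi ts (ltW ts0) _)); first by rewrite tsE.
have [hxy hid] := ident R alpha Rad s c hs2 (lt0r_neq0 Dp) (lt0r_neq0 an).
set x := (alpha ^+ 2 - 1) * s / D in hxy hid.
set y := (2 * alpha + (1 + alpha ^+ 2) * c) / D in hxy hid.
have y0 : 0 <= y.
  rewrite /y divr_ge0 //; last exact: ltW.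
  have h1 := mulr_gt0 halpha0 an.
  have h2 : 0 < (1 + alpha ^+ 2) * (alpha + c) by rewrite mulr_gt0 //; nra.
  nra.
have [xm1 x1] : -1 <= x /\ x <= 1 by split; nra.
have Ecos : cos (psi_star alpha lambda) = x.
  by rewrite /psi_star acosK // in_itv /= xm1 x1.
have Esin : sin (psi_star alpha lambda) = y.
  rewrite /psi_star sin_acos; last by rewrite xm1 x1.
  rewrite -/s -/c -/D -/x (_ : 1 - x ^+ 2 = y ^+ 2); last by lra.
  by rewrite sqrtr_sqr ger0_norm.
apply: lb_le_inf.
  exists (t2 + ts + 1); apply: Hup => //; nra.
move=> t [tt hr]; rewrite leNgt; apply/negP => hlt.
move: hr; rewrite /obs_x /obs_y /tgt_y /=.
rewrite !Rint_cst // Ecos Esin hx.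
have yO : yO2 = yT2 + Rad * c by lra.
rewrite yO.
have h0 : 0 <= t - t2 by lra.
have h1 : t - t2 <= ts by lra.
have hk := key_low R alpha Rad s c x y ts (t - t2) hxy sc hid h0 h1.
have -> : yT2 + Rad * c + alpha * y * (t - t2) - (yT2 + (t - t2)) =
  Rad * c + alpha * y * (t - t2) - (t - t2) by ring.
lra.
Qed.
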